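(* Let $I$ be a bounded open interval containing $0$ and let $f\in C^\infty(I)$ be real-valued. For integers $k\ge 1$, $n\ge 0$ and $t\in I$ put $$f_{k,n}(t):=\frac{(-1)^n}{n!}\,t^n f^{(n+k)}(t).$$ Suppose that for some integer $k\ge1$ the sequence $(f_{k,n})_{n\ge0}$ converges uniformly on $I$. (a) If $k\ge 2$, then the series $\hat f(t)$ converges uniformly on $I$ and $\hat f(t)=f(0)$ for all $t\in I$. (b) If $k=1$, let $\check f(t):=\lim_{n\to\infty}f_{1,n}(t)$ (uniform limit on $I$). Then $\hat f$ converges uniformly on $I$, its sum is differentiable on $I$, and $\frac{d}{dt}\hat f(t)=\check f(t)$ for all $t\in I$. In particular, if $\check f\equiv 0$ on $I$ (i.e. $\frac{(-1)^n}{n!}t^nf^{(n+1)}(t)\to0$ uniformly on $I$), then $\hat f(t)=f(0)$ for all $t\in I$.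
   Context: For a smooth function $f$ on an interval containing the point $t$, $\hat f(t)$ denotes the series $\hat f(t):=\sum_{n=0}^{\infty}\frac{(-1)^n}{n!}\,t^n f^{(n)}(t)$; ''$\hat f$ converges (uniformly) on a set'' means its partial sums $\sum_{n=0}^N\frac{(-1)^n}{n!}t^nf^{(n)}(t)$ converge (uniformly) on that set, and $\hat f(t)$ also denotes the sum. *)

(* Defs.v *)
From Stdlib Require Import Reals Lra Lia Factorial.
Open Scope R_scope.

Definition in_I (a b t : R) : Prop := a < t < b.

(* [higher_derivs a b f F]: F n is the n-th derivative of f on the open
   interval (a,b), i.e. F 0 = f and (F n)' = F (n+1) at every point of (a,b).
   Such an F exists iff f is C^infinity on (a,b). *)
Definition higher_derivs (a b : R) (f : R -> R) (F : nat -> R -> R) : Prop :=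
  F O = f /\
  forall (n : nat) (t : R), in_I a b t -> derivable_pt_lim (F n) t (F (S n) t).

Definition unif_cv_on (fn : nat -> R -> R) (g : R -> R) (P : R -> Prop) : Prop :=
  forall eps : R, 0 < eps ->
    exists N : nat, forall (n : nat) (t : R), (n >= N)%nat -> P t ->
      Rabs (fn n t - g t) < eps.

Definition f_kn (F : nat -> R -> R) (k n : nat) (t : R) : R :=
  (-1) ^ n / INR (fact n) * t ^ n * F (n + k)%nat t.

Definition hat_partial (F : nat -> R -> R) (N : nat) (t : R) : R :=
  sum_f_R0 (fun n => (-1) ^ n / INR (fact n) * t ^ n * F n t) N.

(* Main.v *)
Require Import Defs.
From Stdlib Require Import Reals Lra Lia Ranalysis5 IndefiniteDescription Classical FunctionalExtensionality Factorial.
Open Scope R_scope.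

Lemma dlim_eq f x l l' : derivable_pt_lim f x l -> l = l' -> derivable_pt_lim f x l'.
Proof. intros H ->; exact H. Qed.

Lemma inI_abs a b t : a < 0 -> 0 < b -> in_I a b t -> Rabs t < b - a.
Proof. unfold in_I; intros; apply Rabs_def1; lra. Qed.

Lemma core a b u u' e t : a < 0 -> 0 < b ->
  (forall x, in_I a b x -> derivable_pt_lim u x (u' x)) ->
  (forall x, in_I a b x -> Rabs (u' x) < e) -> in_I a b t ->
  Rabs (u t - u 0) < e * (b - a).
Proof.
  intros Ha Hb Hd He Ht.
  destruct (MVT_abs u u' 0 t) as [c [Hc1 Hc2]].
  { intros c Hc; apply Hd. unfold in_I in *; unfold Rmin, Rmax in Hc.
    destruct (Rle_dec 0 t); lra. }
  assert (Hci : in_I a b c).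
  { unfold in_I in *; unfold Rmin, Rmax in Hc2; destruct (Rle_dec 0 t); lra. }
  rewrite Hc1. replace (t - 0) with t by ring.
  pose proof (He c Hci). pose proof (inI_abs a b t Ha Hb Ht).
  pose proof (Rabs_pos (u' c)). pose proof (Rabs_pos t). nra.
Qed.

Lemma U0 a b (h d : nat -> R -> R) c : a < 0 -> 0 < b ->
  (forall n t, in_I a b t -> derivable_pt_lim (h n) t (d n t)) ->
  (forall n, h n 0 = c) ->
  (forall eps, 0 < eps -> exists N, forall n t, (n >= N)%nat -> in_I a b t -> Rabs (d n t) < eps) ->
  unif_cv_on h (fun _ => c) (in_I a b).
Proof.
  intros Ha Hb Hd H0 Hcv eps Heps.
  destruct (Hcv (eps / (b - a))) as [N HN].
  { apply Rdiv_lt_0_compat; lra. }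
  exists N; intros n t Hn Ht.
  rewrite <- (H0 n).
  replace eps with (eps / (b - a) * (b - a)) by (field; lra).
  apply (core a b (h n) (d n)); auto.
Qed.

Lemma unif_pt (h : nat -> R -> R) S (P : R -> Prop) t :
  unif_cv_on h S P -> P t -> Un_cv (fun n => h n t) (S t).
Proof.
  intros H Ht eps Heps; destruct (H eps Heps) as [N HN]; exists N; intros n Hn.
  unfold R_dist; apply HN; auto.
Qed.

Lemma unif_uniq (h : nat -> R -> R) S1 S2 (P : R -> Prop) t :
  unif_cv_on h S1 P -> unif_cv_on h S2 P -> P t -> S1 t = S2 t.
Proof.
  intros H1 H2 Ht; apply (UL_sequence (fun n => h n t)); eapply unif_pt; eauto.
Qed.

Lemma U1 a b (h d : nat -> R -> R) D c : a < 0 -> 0 < b ->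
  (forall n t, in_I a b t -> derivable_pt_lim (h n) t (d n t)) ->
  (forall n, h n 0 = c) ->
  unif_cv_on d D (in_I a b) ->
  exists S, unif_cv_on h S (in_I a b).
Proof.
  intros Ha Hb Hd H0 Hcv.
  assert (UC : forall eps, 0 < eps -> exists N, forall n m t, (n >= N)%nat -> (m >= N)%nat ->
             in_I a b t -> Rabs (h n t - h m t) < eps).
  { intros eps Heps.
    destruct (Hcv (eps / (b - a) / 2)) as [N HN].
    { apply Rdiv_lt_0_compat; try lra; apply Rdiv_lt_0_compat; lra. }
    exists N; intros n m t Hn Hm Ht.
    replace eps with (eps / (b - a) * (b - a)) by (field; lra).
    assert (K : Rabs ((fun t => h n t - h m t) t - (fun t => h n t - h m t) 0) < eps / (b - a) * (b - a)).
    2:{ cbv beta in K; rewrite !H0 in K; replace (h n t - h m t) with (h n t - h m t - (c - c)) by ring; exact K. }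
    apply (core a b (fun t => h n t - h m t) (fun t => d n t - d m t)); auto.
    - intros x Hx; apply (derivable_pt_lim_minus (h n) (h m)); auto.
    - intros x Hx. pose proof (HN n x Hn Hx); pose proof (HN m x Hm Hx).
      replace (d n x - d m x) with ((d n x - D x) - (d m x - D x)) by ring.
      eapply Rle_lt_trans; [apply Rabs_triang|]. rewrite Rabs_Ropp.
      assert (0 < b - a) by lra. assert (eps / (b - a) / 2 * 2 = eps / (b-a)) by (field; lra). lra. }
  assert (PT : forall t, exists l, in_I a b t -> Un_cv (fun n => h n t) l).
  { intros t. destruct (classic (in_I a b t)) as [Ht|Ht].
    - assert (Cc : Cauchy_crit (fun n => h n t)).
      { intros eps Heps; destruct (UC eps Heps) as [N HN]; exists N; intros n m Hn Hm.
        unfold R_dist; apply HN; auto. }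
      destruct (R_complete _ Cc) as [l Hl]; exists l; auto.
    - exists 0; intros; contradiction. }
  destruct (functional_choice _ PT) as [S HS].
  exists S; intros eps Heps.
  destruct (UC (eps/2)) as [N HN]; [lra|].
  exists N; intros n t Hn Ht.
  destruct (HS t Ht (eps/2)) as [M HM]; [lra|].
  pose proof (HM (max N M) ltac:(lia)). unfold R_dist in H.
  pose proof (HN n (max N M) t Hn ltac:(lia) Ht).
  replace (h n t - S t) with ((h n t - h (max N M) t) + (h (max N M) t - S t)) by ring.
  eapply Rle_lt_trans; [apply Rabs_triang|]. lra.
Qed.

Lemma d_fkn a b F j m t : (forall n t, in_I a b t -> derivable_pt_lim (F n) t (F (S n) t)) ->
  in_I a b t ->
  derivable_pt_lim (f_kn F j m) t
    ((-1)^m / INR (fact m) * (INR m * t ^ pred m) * F (m + j)%nat t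
     + (-1)^m / INR (fact m) * t ^ m * F (S (m + j)) t).
Proof.
  intros HF Ht.
  assert (H1 := derivable_pt_lim_scal (fun y => y ^ m) ((-1)^m / INR (fact m)) t _ (derivable_pt_lim_pow t m)).
  assert (H := derivable_pt_lim_mult _ _ t _ _ H1 (HF (m + j)%nat t Ht)).
  exact H.
Qed.

Lemma d_hat a b F N t : (forall n t, in_I a b t -> derivable_pt_lim (F n) t (F (S n) t)) ->
  in_I a b t -> derivable_pt_lim (hat_partial F N) t (f_kn F 1 N t).
Proof.
  intros HF Ht. induction N as [|N IH].
  - change (hat_partial F 0) with (f_kn F 0 0).
    eapply dlim_eq; [apply (d_fkn a b); auto|].
    unfold f_kn; simpl; ring.
  - assert (E : hat_partial F (S N) = fun t => hat_partial F N t + f_kn F 0 (S N) t).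
    { apply functional_extensionality; intro x. unfold hat_partial, f_kn. simpl sum_f_R0.
      rewrite Nat.add_0_r. reflexivity. }
    rewrite E.
    eapply dlim_eq; [apply (derivable_pt_lim_plus (hat_partial F N) (f_kn F 0 (S N))); [exact IH| apply (d_fkn a b); auto]|].
    unfold f_kn. rewrite !Nat.add_0_r, !Nat.add_1_r. simpl pred.
    rewrite fact_simpl, mult_INR. rewrite S_INR.
    pose proof (INR_fact_neq_0 N). pose proof (pos_INR N).
    simpl pow. field. lra.
Qed.

Lemma hat0 F N : hat_partial F N 0 = F O 0.
Proof.
  induction N as [|N IH]; unfold hat_partial in *; simpl sum_f_R0.
  - simpl; field.
  - rewrite IH. simpl pow. ring.
Qed.

Lemma d_fkn_succ a b F i n t : (forall n t, in_I a b t -> derivable_pt_lim (F n) t (F (S n) t)) ->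
  in_I a b t ->
  derivable_pt_lim (f_kn F (S i) (S n)) t (f_kn F (S (S i)) (S n) t - f_kn F (S (S i)) n t).
Proof.
  intros HF Ht. eapply dlim_eq; [apply (d_fkn a b); auto|].
  unfold f_kn. simpl pred.
  replace (S (S n + S i)) with (S n + S (S i))%nat by lia.
  replace (S n + S i)%nat with (n + S (S i))%nat by lia.
  rewrite fact_simpl, mult_INR. rewrite S_INR.
  pose proof (INR_fact_neq_0 n). pose proof (pos_INR n).
  simpl pow. field. lra.
Qed.

Lemma fkn0 F k n : f_kn F k (S n) 0 = 0.
Proof. unfold f_kn; simpl; ring. Qed.

Lemma Down a b F i : a < 0 -> 0 < b ->
  (forall n t, in_I a b t -> derivable_pt_lim (F n) t (F (S n) t)) ->
  (exists g, unif_cv_on (fun n => f_kn F (S (S i)) n) g (in_I a b)) ->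
  unif_cv_on (fun n => f_kn F (S i) n) (fun _ => 0) (in_I a b).
Proof.
  intros Ha Hb HF [g Hg].
  assert (H := U0 a b (fun n => f_kn F (S i) (S n))
     (fun n t => f_kn F (S (S i)) (S n) t - f_kn F (S (S i)) n t) 0 Ha Hb).
  assert (H' : unif_cv_on (fun n => f_kn F (S i) (S n)) (fun _ => 0) (in_I a b)).
  { apply H.
    - intros; apply (d_fkn_succ a b); auto.
    - intros; apply fkn0.
    - intros eps Heps. destruct (Hg (eps/2)) as [N HN]; [lra|].
      exists N; intros n t Hn Ht.
      pose proof (HN (S n) t ltac:(lia) Ht). pose proof (HN n t Hn Ht).
      replace (f_kn F (S (S i)) (S n) t - f_kn F (S (S i)) n t) with
        ((f_kn F (S (S i)) (S n) t - g t) - (f_kn F (S (S i)) n t - g t)) by ring.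
      eapply Rle_lt_trans; [apply Rabs_triang|]. rewrite Rabs_Ropp. lra. }
  intros eps Heps. destruct (H' eps Heps) as [N HN]. exists (S N).
  intros n t Hn Ht. destruct n as [|n]; [lia|]. apply HN; auto; lia.
Qed.

Lemma Z a b F i : a < 0 -> 0 < b ->
  (forall n t, in_I a b t -> derivable_pt_lim (F n) t (F (S n) t)) ->
  (exists g, unif_cv_on (fun n => f_kn F (S (S i)) n) g (in_I a b)) ->
  unif_cv_on (fun n => f_kn F 1 n) (fun _ => 0) (in_I a b).
Proof.
  intros Ha Hb HF. induction i as [|i IH]; intros Hg.
  - apply (Down a b F 0); auto.
  - apply IH. exists (fun _ => 0). apply (Down a b F (S i)); auto.
Qed.

Lemma Boule_I a b y : a < b -> forall (Hr : 0 < (b - a)/2),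
  Boule ((a+b)/2) (mkposreal _ Hr) y <-> in_I a b y.
Proof.
  intros Hab Hr. unfold Boule, in_I; simpl. split; intro H.
  - apply Rabs_def2 in H; lra.
  - apply Rabs_def1; lra.
Qed.

Lemma Bpart a b f F (fcheck : R -> R) : a < 0 -> 0 < b -> higher_derivs a b f F ->
  unif_cv_on (fun n => f_kn F 1 n) fcheck (in_I a b) ->
  exists S : R -> R,
    unif_cv_on (hat_partial F) S (in_I a b) /\
    (forall t, in_I a b t -> derivable_pt_lim S t (fcheck t)) /\
    ((forall t, in_I a b t -> fcheck t = 0) -> forall t, in_I a b t -> S t = f 0).
Proof.
  intros Ha Hb [HF0 HF] Hc.
  assert (Hd : forall n t, in_I a b t -> derivable_pt_lim (hat_partial F n) t (f_kn F 1 n t)).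
  { intros; apply (d_hat a b); auto. }
  assert (H0 : forall n, hat_partial F n 0 = f 0).
  { intros; rewrite hat0, HF0; reflexivity. }
  destruct (U1 a b (hat_partial F) (fun n => f_kn F 1 n) fcheck (f 0) Ha Hb Hd H0 Hc) as [Sf HS].
  exists Sf; split; [exact HS|split].
  - intros t Ht.
    assert (Hr : 0 < (b - a)/2) by lra.
    assert (BI := fun y => Boule_I a b y ltac:(lra) Hr).
    assert (CV : CVU (fun n => f_kn F 1 n) fcheck ((a+b)/2) (mkposreal _ Hr)).
    { intros eps Heps; destruct (Hc eps Heps) as [N HN]; exists N; intros n y Hn Hy.
      rewrite Rabs_minus_sym; apply HN; [lia|]; apply BI; auto. }
    apply (derivable_pt_lim_CVU (hat_partial F) (fun n => f_kn F 1 n) Sf fcheck t ((a+b)/2) (mkposreal _ Hr)).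
    + apply BI; auto.
    + intros y n Hy; apply Hd; apply BI; auto.
    + intros y Hy; apply (unif_pt _ _ (in_I a b)); auto; apply BI; auto.
    + exact CV.
    + apply (CVU_continuity _ _ _ _ CV). intros n y Hy.
      apply derivable_continuous_pt. exists ((-1)^n / INR (fact n) * (INR n * y ^ pred n) * F (n + 1)%nat y
        + (-1)^n / INR (fact n) * y ^ n * F (S (n + 1)) y).
      apply (d_fkn a b); auto; apply BI; auto.
  - intros Hz t Ht.
    assert (HU := U0 a b (hat_partial F) (fun n => f_kn F 1 n) (f 0) Ha Hb Hd H0).
    assert (HU' : unif_cv_on (hat_partial F) (fun _ => f 0) (in_I a b)).
    { apply HU. intros eps Heps; destruct (Hc eps Heps) as [N HN]; exists N; intros n y Hn Hy.
      pose proof (HN n y Hn Hy). rewrite Hz in H; auto. rewrite Rminus_0_r in H; auto. }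
    apply (unif_uniq (hat_partial F) Sf (fun _ => f 0) (in_I a b)); auto.
Qed.

Theorem theorem2 (a b : R) (f : R -> R) (F : nat -> R -> R) (k : nat)
  (Ha : a < 0) (Hb : 0 < b)
  (HF : higher_derivs a b f F)
  (Hk : (1 <= k)%nat)
  (Hcv : exists g : R -> R, unif_cv_on (fun n => f_kn F k n) g (in_I a b)) :
  ((2 <= k)%nat ->
     exists S : R -> R,
       unif_cv_on (hat_partial F) S (in_I a b) /\
       (forall t, in_I a b t -> S t = f 0)) /\
  (k = 1%nat ->
     forall fcheck : R -> R,
       unif_cv_on (fun n => f_kn F 1 n) fcheck (in_I a b) ->
       exists S : R -> R,
         unif_cv_on (hat_partial F) S (in_I a b) /\
         (forall t, in_I a b t -> derivable_pt_lim S t (fcheck t)) /\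
         ((forall t, in_I a b t -> fcheck t = 0) ->
            forall t, in_I a b t -> S t = f 0)).
Proof.
  split.
  - intros Hk2. destruct k as [|[|i]]; [lia|lia|].
    assert (Z1 := Z a b F i Ha Hb (proj2 HF) Hcv).
    destruct (Bpart a b f F (fun _ => 0) Ha Hb HF Z1) as [S [H1 [_ H3]]].
    exists S; split; auto.
  - intros _ fcheck Hc. apply (Bpart a b f F fcheck Ha Hb HF Hc).
Qed.
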